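(* Let $f$ be a probability density on $\mathbb{R}$ symmetric about $0$, let $G$ be an absolutely continuous cumulative distribution function on $\mathbb{R}$ symmetric about $0$ with density $g$, and let $\omega:\mathbb{R}\to\mathbb{R}$ be an odd function with $\omega(x)>0$ for $x>0$. Assume $g$ is a bounded probability density and $\int_0^\infty\omega(x)f(x)\,dx<\infty$, and define $$\pi_{TV}(\lambda\mid 1,1)=2\int_0^\infty \omega(x)\,f(x)\,g(\lambda\,\omega(x))\,dx,\qquad \lambda\in\mathbb{R}.$$ Then: (i) $\pi_{TV}(\lambda\mid 1,1)$ is symmetric about $\lambda=0$; (ii) if $g$ is unimodal, then $\pi_{TV}(\lambda\mid 1,1)$ is decreasing in $|\lambda|$; (iii) if $\omega(x)=x$, $f$ is unimodal, $f(0)=M<\infty$ and $\int_0^\infty x\,g(x)\,dx<\infty$, then the tails of $\pi_{TV}(\lambda\mid 1,1)$ are of order $O(|\lambda|^{-2})$ as $|\lambda|\to\infty$.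
   Context: This $\pi_{TV}(\lambda\mid1,1)$ is the $BTV(1,1)$ prior for the skewness parameter $\lambda$ of the skew-symmetric densities $\frac{2}{\sigma}f\left(\frac{x-\mu}{\sigma}\right)G\left(\lambda\,\omega\left(\frac{x-\mu}{\sigma}\right)\right)$; it equals $\frac{d}{d\lambda}M_{TV}(\lambda)$ where $M_{TV}(\lambda)=\operatorname{sign}(\lambda)\frac12\int_{\mathbb{R}}|2G(\lambda\omega(x))-1|f(x)\,dx$. *)

(* Defs.v *)
From HB Require Import structures.
From mathcomp Require Import all_boot all_order all_algebra.
From mathcomp Require Import all_classical all_reals all_analysis.
Set Implicit Arguments. Unset Strict Implicit. Unset Printing Implicit Defensive.
Import Order.TTheory GRing.Theory Num.Theory.
Local Open Scope classical_set_scope.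
Local Open Scope ring_scope.

Section Defs.
Variable R : realType.
Notation mu := (@lebesgue_measure R).

Definition prob_density (f : R -> R) : Prop :=
  measurable_fun setT f /\ (forall x, 0 <= f x) /\
  (\int[mu]_x (f x)%:E = 1)%E.

Definition symmetric0 (f : R -> R) : Prop := forall x, f (- x) = f x.

Definition cdf_of_density (G g : R -> R) : Prop :=
  forall x, G x = Rintegral mu `]-oo, x] g.

Definition cdf_symmetric0 (G : R -> R) : Prop := forall x, G (- x) = 1 - G x.

Definition odd_fun (w : R -> R) : Prop := forall x, w (- x) = - w x.


Definition unimodal (g : R -> R) : Prop :=
  exists m : R,
    (forall x y, x <= y -> y <= m -> g x <= g y) /\
    (forall x y, m <= x -> x <= y -> g y <= g x).

Definition piTV (f g w : R -> R) (l : R) : R :=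
  2 * Rintegral mu `[0%R, +oo[ (fun x => w x * f x * g (l * w x)).

End Defs.

(* Main.v *)
Require Import Defs.
From HB Require Import structures.
From mathcomp Require Import all_boot all_order all_algebra.
From mathcomp Require Import all_classical all_reals all_analysis.
From mathcomp Require Import measurable_realfun ring lra.
Import Order.TTheory GRing.Theory Num.Theory.
Local Open Scope classical_set_scope.
Local Open Scope ring_scope.

Section S.
Context {R : realType}.
Local Notation mu := (@lebesgue_measure R).
Variable c : R.
Hypothesis c0 : 0 < c.
Let cnng : {nonneg R} := NngNum (ltW c0).
Let mphi : measurable_fun setT ( *%R c : R -> R).
Proof. exact: mulrl_measurable. Qed.

Lemma lebesgue_scale (A : set R) : measurable A ->
  mu A = (c%:E * pushforward mu ( *%R c : R -> measurableTypeR R) A)%E.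
Proof.
move=> mA.
pose PF := measure_function_pushforward__canonical__measure_function_Measure mu (mphi : measurable_fun setT ( *%R c : R -> measurableTypeR R)).
refine (@lebesgue_measure_unique R (mscale cnng PF) _ A mA).
move=> _ [[a b]] _ <-.
change (mu `]a, b] = (c%:E * mu (( *%R c) @^-1` `]a, b]))%E).
have -> : ( *%R c) @^-1` `]a, b]%classic = `]a / c, b / c]%classic.
  apply/seteqP; split => x /=; rewrite !in_itv /= ltr_pdivrMr // ler_pdivlMr // ![x * c]mulrC //.
rewrite !lebesgue_measure_itv /= !lte_fin ltr_pM2r ?invr_gt0 //.
case: ifPn => ab; last by rewrite mule0.
by rewrite -EFinD -EFinM -mulrBl mulrCA divff ?gt_eqF // mulr1.
Qed.

Lemma integral_scale (h : R -> \bar R) : measurable_fun setT h -> (forall x, 0 <= x -> (0 <= h x)%E) ->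
  (\int[mu]_(x in `[0%R, +oo[) h (c * x)%R = (c^-1)%:E * \int[mu]_(x in `[0%R, +oo[) h x)%E.
Proof.
move=> mh h0.
pose PF := measure_function_pushforward__canonical__measure_function_Measure mu (mphi : measurable_fun setT ( *%R c : R -> measurableTypeR R)).
have E : ( *%R c) @^-1` `[0%R, +oo[%classic = `[0%R, +oo[%classic.
  apply/seteqP; split => x /=; rewrite !in_itv /= !andbT pmulr_rge0 //.
have H1 : (\int[PF]_(y in `[0%R, +oo[) h y = \int[mu]_(x in `[0%R, +oo[) h (c * x)%R)%E.
  have mphi' : measurable_fun (setT : set (measurableTypeR R)) ( *%R c : measurableTypeR R -> measurableTypeR R) by exact: mphi.
  rewrite -[in RHS]E -(@ge0_integral_pushforward _ _ _ _ R _ mphi' mu `[0%R, +oo[%classic h).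
  - by [].
  - exact: measurable_itv.
  - exact: measurable_funTS.
  - by move=> y; rewrite inE /= in_itv /= andbT; exact: h0.
have H2 : (\int[mu]_(x in `[0%R, +oo[) h x = \int[mscale cnng PF]_(x in `[0%R, +oo[) h x)%E.
  apply: eq_measure_integral => A mA _.
  have L := @lebesgue_scale A mA. exact: L.
rewrite H2 ge0_integral_mscale //=; [|exact: measurable_funTS|by move=> y; rewrite /= in_itv /= andbT; exact: h0].
by rewrite -H1 muleA -EFinM mulVf ?gt_eqF // mul1e.
Qed.
End S.

Lemma sym_unimodal_mono (R : realType) (g : R -> R) : symmetric0 g -> unimodal g ->
  forall a b, `|a| <= `|b| -> g b <= g a.
Proof.
move=> hs [m [h1 h2]].
have gn y : g `|y| = g y.
  by have [y0|y0] := leP 0 y; [rewrite ger0_norm | rewrite ltr0_norm // hs].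
suff H : forall p q, 0 <= p -> p <= q -> g q <= g p.
  by move=> a b ab; rewrite -(gn a) -(gn b); apply: H.
move=> p q p0 pq; have [m0|m0] := leP 0 m.
  rewrite -(hs q) -(hs p); apply: h1; first by rewrite lerN2.
  by rewrite lerNl (le_trans _ p0) // oppr_le0.
by apply: h2 => //; exact: (le_trans (ltW m0) p0).
Qed.

Theorem theorem1 (R : realType) (f G g w : R -> R)
  (hf : prob_density f) (hfs : symmetric0 f)
  (hG : cdf_of_density G g) (hGs : cdf_symmetric0 G)
  (hg : prob_density g) (hgs : symmetric0 g) (hgb : bounded_fun g)
  (hwm : measurable_fun setT w) (hwo : odd_fun w)
  (hwpos : forall x, 0 < x -> 0 < w x)
  (hwf : (\int[@lebesgue_measure R]_(x in `[0%R, +oo[) (w x * f x)%:E < +oo)%E) :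
  (* (i) symmetry about 0 *)
  (forall l, piTV f g w (- l) = piTV f g w l) /\
  (* (ii) g unimodal => nonincreasing in |lambda| *)
  (unimodal g -> forall l1 l2, `|l1| <= `|l2| -> piTV f g w l2 <= piTV f g w l1) /\
  (* (iii) tails O(|lambda|^-2) *)
  ((forall x, w x = x) -> unimodal f ->
   (\int[@lebesgue_measure R]_(x in `[0%R, +oo[) (x * g x)%:E < +oo)%E ->
   exists C L : R, forall l, L <= `|l| -> `|piTV f g w l| <= C / `|l| ^+ 2).
Proof.
Proof.
have mD : measurable (`[0%R, +oo[%classic : set (measurableTypeR R)) by exact: measurable_itv.
case: hf => mf [f0 _]; case: hg => mg [g0 _].
have w00 : w 0 = 0 by have := hwo 0; rewrite oppr0 => h; lra.
have wge0 x : 0 <= x -> 0 <= w x.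
  by rewrite le_eqVlt => /orP[/eqP <-|/hwpos/ltW//]; rewrite w00.
have Dge0 (x : R) : `[0%R, +oo[%classic x -> 0 <= x by rewrite /= in_itv /= andbT.
have mF l : measurable_fun setT (fun x => w x * f x * g (l * w x)).
  apply: measurable_funM; first exact: measurable_funM.
  apply: (measurableT_comp mg); exact: (measurableT_comp (mulrl_measurable l) hwm).
split.
  move=> l; rewrite /piTV; congr (_ * _); congr Rintegral.
  by apply: funext => x; rewrite mulNr hgs.
split.
  move=> hu l1 l2 l12.
  have iwf : (@lebesgue_measure R).-integrable (`[0%R, +oo[%classic : set R) (EFin \o (fun x => w x * f x)).
    apply/integrableP; split.
      by apply/measurable_EFinP; apply: measurable_funTS; exact: measurable_funM.
    apply: le_lt_trans hwf; rewrite le_eqVlt; apply/orP; left; apply/eqP.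
    apply: eq_integral => x; rewrite inE => /Dge0 x0 /=; rewrite ger0_norm //.
    by rewrite mulr_ge0 // wge0.
  have iF l : (@lebesgue_measure R).-integrable (`[0%R, +oo[%classic : set R)
       (EFin \o (fun x => w x * f x * g (l * w x))).
    have mh : measurable_fun (`[0%R, +oo[%classic : set (measurableTypeR R)) (fun x => g (l * w x)).
      apply: (measurableT_comp mg); apply: measurable_funTS.
      exact: (measurableT_comp (mulrl_measurable l) hwm).
    have bh : [bounded g (l * w x) | x in (`[0%R, +oo[%classic : set R)].
      case: hgb => M [Mr HM]; exists M; split => // N MN x _; exact: (HM N MN (l * w x) I).
    have := integrableMl mD iwf mh bh. apply: eq_integrable => //.
  rewrite /piTV ler_pM2l // ; apply: le_Rintegral => // x /Dge0 x0.
  apply: ler_wpM2l; first by rewrite mulr_ge0 // wge0.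
  apply: sym_unimodal_mono => //.
  by rewrite !normrM (ger0_norm (wge0 _ x0)) ler_wpM2r // wge0.
move=> hw uf hxg.
have fle (x : R) : 0 <= x -> f x <= f 0.
  by move=> x0; apply: sym_unimodal_mono => //; rewrite normr0.
have gl (l x : R) : 0 <= x -> g (l * x) = g (`|l| * x).
  move=> x0; have [l0|l0] := leP 0 l; first by rewrite ger0_norm.
  by rewrite ltr0_norm // mulNr hgs.
set K := (\int[lebesgue_measure]_(x in `[0%R, +oo[) (x * g x)%:E)%E.
have K0 : (0 <= K)%E.
  by apply: integral_ge0 => x /Dge0 x0; rewrite lee_fin mulr_ge0.
have Kfin : K \is a fin_num by rewrite ge0_fin_numE.
have mxg : measurable_fun setT (fun x : R => x * g x).
  by apply: measurable_funM => //; exact: measurable_id.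
exists (2 * f 0 * fine K), 1 => l l1.
have c0 : 0 < `|l| by apply: lt_le_trans l1.
set c := `|l|.
set I := (\int[lebesgue_measure]_(x in `[0%R, +oo[) (w x * f x * g (l * w x))%:E)%E.
have I0 : (0 <= I)%E.
  by apply: integral_ge0 => x /Dge0 x0; rewrite lee_fin hw !mulr_ge0.
have IB : (I <= (f 0 * c^-1)%:E * ((c^-1)%:E * K))%E.
  rewrite -(@integral_scale R c c0 (fun x => (x * g x)%:E)); last 2 first.
  - by apply/measurable_EFinP.
  - by move=> x x0; rewrite lee_fin mulr_ge0.
  rewrite -ge0_integralZl_EFin //; last 3 first.
  - by move=> x /Dge0 x0; rewrite lee_fin mulr_ge0 // mulr_ge0 // ltW.
  - apply/measurable_EFinP; apply: measurable_funTS.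
    exact: (measurableT_comp mxg (mulrl_measurable c)).
  - by rewrite mulr_ge0 // ?invr_ge0 ltW.
  apply: ge0_le_integral => //.
  - by move=> x /Dge0 x0; rewrite lee_fin hw !mulr_ge0.
  - exact: (proj2 (measurable_EFinP _ _) (measurable_funTS (mF l))).
  - apply: measurable_funTS; apply: measurable_funeM; apply/measurable_EFinP.
    exact: (measurableT_comp mxg (mulrl_measurable c)).
  move=> x /Dge0 x0; rewrite lee_fin hw gl //.
  have -> : f 0 * c^-1 * (c * x * g (c * x)) = x * f 0 * g (c * x).
    by field; rewrite gt_eqF.
  by rewrite ler_wpM2r // ler_wpM2l // fle.
have Bfin : ((f 0 * c^-1)%:E * ((c^-1)%:E * K))%E \is a fin_num.
  by rewrite -(fineK Kfin) -!EFinM.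
have fI : I \is a fin_num.
  by rewrite ge0_fin_numE // (le_lt_trans IB) // ltey_eq Bfin.
rewrite /piTV /Rintegral -/I ger0_norm; last by rewrite mulr_ge0 // fine_ge0.
apply: (le_trans (ler_wpM2l _ (fine_le fI Bfin IB))) => //.
rewrite -(fineK Kfin) -!EFinM /= le_eqVlt; apply/orP; left; apply/eqP.
by field; rewrite gt_eqF.
Qed.
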